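(* Let t₁ and t₂ be regular terms in the language of strong quasi-Wajsberg* algebras. Then the equation t₁ ≈ t₂ holds in all strong quasi-Wajsberg* algebras iff it holds in all Wajsberg* algebras.
   Context: A quasi-Wajsberg* algebra is an algebra ⟨W; →, ¬, ⁺, ⁻, 1⟩ of type ⟨2,1,1,1,0⟩ satisfying: x→y = ¬y→¬x; (x→1)→((y→1)→z) = (y→1)→((x→1)→z); (1→x)→1 = 1; (z→z)→(x→y) = x→y; (1→1)→x⁺ = ((1→1)→x)⁺ = (x→1)→1 and (1→1)→x⁻ = ((1→1)→x)⁻ = (x→¬1)→¬1; x→y = (y⁺→x⁻)→(x⁺→y⁻); ¬(x→y) = y→x; ¬¬x = x; (x→(¬x→y))⁺ = x⁺→(¬x⁺→y⁺); x∨y = y∨x; x∨(y∨z) = (x∨y)∨z; x→(y∨z) = (x→y)∨(x→z); where x∨y = ((x⁺→y⁺)⁺→(¬x)⁻)→((y⁻→x⁻)⁻→x⁻). A strong quasi-Wajsberg* algebra is a quasi-Wajsberg* algebra satisfying x⁺ = (1→1)→x⁺ and x⁻ = (1→1)→x⁻ for all x. A Wajsberg* algebra is an algebra ⟨M; →, ¬, 1⟩ satisfying the analogous axioms with (y→y)→x = x in place of (z→z)→(x→y) = x→y, where x⁺ = (x→1)→1 and x⁻ = (x→¬1)→¬1; every Wajsberg* algebra is a strong quasi-Wajsberg* algebra. A term in the language of strong quasi-Wajsberg* algebras (built from variables, →, ¬, 1) is called regular if it contains → or 1; the non-regular terms are exactly ¬ⁿp with p a variable and n ≥ 0. *)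

(* Defs.v *)
Set Implicit Arguments.

Inductive term : Type :=
| tvar : nat -> term
| timp : term -> term -> term
| tneg : term -> term
| tone : term.

Fixpoint regular (t : term) : bool :=
  match t with
  | tvar _ => false
  | timp _ _ => true
  | tneg u => regular u
  | tone => true
  end.

Record qWalg : Type := QWAlg {
  qcar :> Type;
  qimp : qcar -> qcar -> qcar;
  qneg : qcar -> qcar;
  qplus : qcar -> qcar;
  qminus : qcar -> qcar;
  qone : qcar
}.
Arguments qimp {q} _ _.
Arguments qneg {q} _.
Arguments qplus {q} _.
Arguments qminus {q} _.
Arguments qone {q}.

Definition qjoin {A : qWalg} (x y : A) : A :=
  qimp (qimp (qplus (qimp (qplus x) (qplus y))) (qminus (qneg x)))
       (qimp (qminus (qimp (qminus y) (qminus x))) (qminus x)).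

Definition is_quasi_Wajsberg_star (A : qWalg) : Prop :=
  let imp := @qimp A in let neg := @qneg A in
  let pl := @qplus A in let mi := @qminus A in let one := @qone A in
  let join := @qjoin A in
  (forall x y : A, imp x y = imp (neg y) (neg x)) /\
  (forall x y z : A, imp (imp x one) (imp (imp y one) z)
                     = imp (imp y one) (imp (imp x one) z)) /\
  (forall x : A, imp (imp one x) one = one) /\
  (forall x y z : A, imp (imp z z) (imp x y) = imp x y) /\
  (forall x : A, imp (imp one one) (pl x) = pl (imp (imp one one) x)) /\
  (forall x : A, pl (imp (imp one one) x) = imp (imp x one) one) /\
  (forall x : A, imp (imp one one) (mi x) = mi (imp (imp one one) x)) /\
  (forall x : A, mi (imp (imp one one) x) = imp (imp x (neg one)) (neg one)) /\
  (forall x y : A, imp x y = imp (imp (pl y) (mi x)) (imp (pl x) (mi y))) /\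
  (forall x y : A, neg (imp x y) = imp y x) /\
  (forall x : A, neg (neg x) = x) /\
  (forall x y : A, pl (imp x (imp (neg x) y)) = imp (pl x) (imp (neg (pl x)) (pl y))) /\
  (forall x y : A, join x y = join y x) /\
  (forall x y z : A, join x (join y z) = join (join x y) z) /\
  (forall x y z : A, imp x (join y z) = join (imp x y) (imp x z)).

Definition is_strong_quasi_Wajsberg_star (A : qWalg) : Prop :=
  is_quasi_Wajsberg_star A /\
  (forall x : A, qplus x = qimp (qimp qone qone) (qplus x)) /\
  (forall x : A, qminus x = qimp (qimp qone qone) (qminus x)).

Record Walg : Type := WAlg {
  wcar :> Type;
  wimp : wcar -> wcar -> wcar;
  wneg : wcar -> wcar;
  wone : wcar
}.
Arguments wimp {w} _ _.
Arguments wneg {w} _.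
Arguments wone {w}.

Definition wplus {M : Walg} (x : M) : M := wimp (wimp x wone) wone.
Definition wminus {M : Walg} (x : M) : M := wimp (wimp x (wneg wone)) (wneg wone).

Definition qW_of_W (M : Walg) : qWalg :=
  @QWAlg M (@wimp M) (@wneg M) (@wplus M) (@wminus M) (@wone M).

(** The Wajsberg* axioms: the quasi-Wajsberg* axioms (for the defined + and -),
    with (y -> y) -> x = x in place of (z -> z) -> (x -> y) = x -> y. *)
Definition is_Wajsberg_star (M : Walg) : Prop :=
  let A := qW_of_W M in
  let imp := @qimp A in let neg := @qneg A in
  let pl := @qplus A in let mi := @qminus A in let one := @qone A in
  let join := @qjoin A in
  (forall x y : A, imp x y = imp (neg y) (neg x)) /\
  (forall x y z : A, imp (imp x one) (imp (imp y one) z)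
                     = imp (imp y one) (imp (imp x one) z)) /\
  (forall x : A, imp (imp one x) one = one) /\
  (forall x y : A, imp (imp y y) x = x) /\
  (forall x : A, imp (imp one one) (pl x) = pl (imp (imp one one) x)) /\
  (forall x : A, pl (imp (imp one one) x) = imp (imp x one) one) /\
  (forall x : A, imp (imp one one) (mi x) = mi (imp (imp one one) x)) /\
  (forall x : A, mi (imp (imp one one) x) = imp (imp x (neg one)) (neg one)) /\
  (forall x y : A, imp x y = imp (imp (pl y) (mi x)) (imp (pl x) (mi y))) /\
  (forall x y : A, neg (imp x y) = imp y x) /\
  (forall x : A, neg (neg x) = x) /\
  (forall x y : A, pl (imp x (imp (neg x) y)) = imp (pl x) (imp (neg (pl x)) (pl y))) /\
  (forall x y : A, join x y = join y x) /\
  (forall x y z : A, join x (join y z) = join (join x y) z) /\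
  (forall x y z : A, imp x (join y z) = join (imp x y) (imp x z)).

Fixpoint qeval {A : qWalg} (v : nat -> A) (t : term) : A :=
  match t with
  | tvar n => v n
  | timp t1 t2 => qimp (qeval v t1) (qeval v t2)
  | tneg u => qneg (qeval v u)
  | tone => qone
  end.

Fixpoint weval {M : Walg} (v : nat -> M) (t : term) : M :=
  match t with
  | tvar n => v n
  | timp t1 t2 => wimp (weval v t1) (weval v t2)
  | tneg u => wneg (weval v u)
  | tone => wone
  end.

Definition holds_in_all_sqW (t1 t2 : term) : Prop :=
  forall A : qWalg, is_strong_quasi_Wajsberg_star A ->
    forall v : nat -> A, qeval v t1 = qeval v t2.

Definition holds_in_all_W (t1 t2 : term) : Prop :=
  forall M : Walg, is_Wajsberg_star M ->
    forall v : nat -> M, weval v t1 = weval v t2.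

(* Main.v *)
Require Import Defs.
From Stdlib Require Import ProofIrrelevance.
Set Implicit Arguments.

Ltac getax H n :=
  let H' := fresh in
  match n with
  | 1 => exact (proj1 H)
  | S ?m => pose proof (proj2 H) as H'; getax H' m
  end.

Section Dummy. End Dummy.

Definition ee {A : qWalg} : A := qimp qone qone.

Lemma qax (A : qWalg) (H : is_quasi_Wajsberg_star A) :
  (forall x y : A, qimp x y = qimp (qneg y) (qneg x)) /\
  (forall x : A, qimp (qimp qone x) qone = qone) /\
  (forall x y z : A, qimp (qimp z z) (qimp x y) = qimp x y) /\
  (forall x : A, qimp ee (qplus x) = qplus (qimp ee x)) /\
  (forall x : A, qplus (qimp ee x) = qimp (qimp x qone) qone) /\
  (forall x : A, qimp ee (qminus x) = qminus (qimp ee x)) /\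
  (forall x : A, qminus (qimp ee x) = qimp (qimp x (qneg qone)) (qneg qone)) /\
  (forall x y : A, qimp x y = qimp (qimp (qplus y) (qminus x)) (qimp (qplus x) (qminus y))) /\
  (forall x y : A, qneg (qimp x y) = qimp y x) /\
  (forall x : A, qneg (qneg x) = x).
Proof.
  destruct H as (a1&a2&a3&a4&a5&a6&a7&a8&a9&a10&a11&_).
  unfold ee; repeat split; auto.
Qed.

Lemma neg_ee (A : qWalg) (H : is_quasi_Wajsberg_star A) (x : A) :
  qimp ee (qneg x) = qneg (qimp ee x).
Proof.
  destruct (qax H) as (a1&a3&a4&a5&a6&a7&a8&a9&a10&a11).
  rewrite a10.
  assert (E : qneg (@ee A) = ee) by (unfold ee; apply a10).
  rewrite (a1 x ee), E. reflexivity.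
Qed.

Lemma ee_imp (A : qWalg) (H : is_quasi_Wajsberg_star A) (x y : A) :
  qimp ee (qimp x y) = qimp x y.
Proof. destruct (qax H) as (a1&a3&a4&_). apply a4. Qed.

Lemma ee_one (A : qWalg) (H : is_quasi_Wajsberg_star A) :
  qimp ee (@qone A) = qone.
Proof. destruct (qax H) as (a1&a3&_). apply a3. Qed.

Definition Rset (A : qWalg) := {x : A | qimp ee x = x}.

Definition RW (A : qWalg) (H : is_quasi_Wajsberg_star A) : Walg :=
  @WAlg (Rset A)
    (fun a b => exist _ (qimp (proj1_sig a) (proj1_sig b)) (ee_imp H _ _))
    (fun a => exist _ (qneg (proj1_sig a))
       (eq_trans (neg_ee H _) (f_equal qneg (proj2_sig a))))
    (exist _ qone (ee_one H)).

Lemma sig_eq' (A : qWalg) (a b : Rset A) : proj1_sig a = proj1_sig b -> a = b.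
Proof.
  destruct a, b; simpl; intros; subst; f_equal; apply proof_irrelevance.
Qed.

Lemma p_plus (A : qWalg) (H : is_quasi_Wajsberg_star A) (x : RW H) :
  proj1_sig (wplus x) = qplus (proj1_sig x).
Proof.
  destruct (qax H) as (a1&a3&a4&a5&a6&a7&a8&a9&a10&a11).
  simpl. rewrite <- a6. rewrite (proj2_sig x). reflexivity.
Qed.

Lemma p_minus (A : qWalg) (H : is_quasi_Wajsberg_star A) (x : RW H) :
  proj1_sig (wminus x) = qminus (proj1_sig x).
Proof.
  destruct (qax H) as (a1&a3&a4&a5&a6&a7&a8&a9&a10&a11).
  simpl. rewrite <- a8. rewrite (proj2_sig x). reflexivity.
Qed.

Lemma p_imp (A : qWalg) (H : is_quasi_Wajsberg_star A) (x y : RW H) :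
  proj1_sig (wimp x y) = qimp (proj1_sig x) (proj1_sig y).
Proof. reflexivity. Qed.
Lemma p_neg (A : qWalg) (H : is_quasi_Wajsberg_star A) (x : RW H) :
  proj1_sig (wneg x) = qneg (proj1_sig x).
Proof. reflexivity. Qed.
Lemma p_one (A : qWalg) (H : is_quasi_Wajsberg_star A) :
  proj1_sig (@wone (RW H)) = qone.
Proof. reflexivity. Qed.

Ltac prw := repeat (rewrite ?p_imp, ?p_neg, ?p_one, ?p_plus, ?p_minus).

Lemma p_join (A : qWalg) (H : is_quasi_Wajsberg_star A) (x y : RW H) :
  proj1_sig (@qjoin (qW_of_W (RW H)) x y) = qjoin (proj1_sig x) (proj1_sig y).
Proof.
  unfold qjoin. cbn [qimp qneg qplus qminus qone qW_of_W]. prw. reflexivity.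
Qed.

Lemma RW_W (A : qWalg) (H : is_quasi_Wajsberg_star A) : is_Wajsberg_star (RW H).
Proof.
  pose proof H as H0.
  destruct H0 as (a1&a2&a3&a4&a5&a6&a7&a8&a9&a10&a11&a12&a13&a14&a15).
  unfold is_Wajsberg_star; cbv zeta; cbn [qimp qneg qplus qminus qone qW_of_W].
  repeat split; intros; apply sig_eq'; rewrite ?p_join; prw; rewrite ?p_join; prw;
    auto.
  - rewrite <- (proj2_sig x). apply a4.
Qed.

Lemma W_sqW (M : Walg) (H : is_Wajsberg_star M) :
  is_strong_quasi_Wajsberg_star (qW_of_W M).
Proof.
  destruct H as (a1&a2&a3&a4&a5&a6&a7&a8&a9&a10&a11&a12&a13&a14&a15).
  split; [ | split; intros; simpl; symmetry; apply a4 ].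
  repeat split; auto.
Qed.

Lemma qeval_W (M : Walg) (v : nat -> M) t :
  @qeval (qW_of_W M) v t = weval v t.
Proof. induction t; simpl; congruence. Qed.

Lemma imp_ee (A : qWalg) (H : is_strong_quasi_Wajsberg_star A) (a b : A) :
  qimp (qimp ee a) (qimp ee b) = qimp a b.
Proof.
  destruct H as [H0 [s1 s2]].
  destruct (qax H0) as (a1&a3&a4&a5&a6&a7&a8&a9&a10&a11).
  rewrite (a9 (qimp ee a)), (a9 a).
  rewrite <- !a5, <- !a7, <- !s1, <- !s2. reflexivity.
Qed.

Definition hv (A : qWalg) (H : is_quasi_Wajsberg_star A) (v : nat -> A) (n : nat)
  : RW H := exist _ (qimp ee (v n)) (ee_imp H _ _).

Lemma hom (A : qWalg) (H : is_strong_quasi_Wajsberg_star A) (v : nat -> A) t :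
  proj1_sig (weval (hv (proj1 H) v) t) = qimp ee (qeval v t).
Proof.
  induction t; simpl.
  - reflexivity.
  - simpl in IHt1, IHt2. rewrite IHt1, IHt2, imp_ee by exact H.
    symmetry; apply (ee_imp (proj1 H)).
  - simpl in IHt. rewrite IHt. symmetry; apply (neg_ee (proj1 H)).
  - symmetry; apply (ee_one (proj1 H)).
Qed.

Lemma reg (A : qWalg) (H : is_quasi_Wajsberg_star A) (v : nat -> A) t :
  regular t = true -> qimp ee (qeval v t) = qeval v t.
Proof.
  induction t; simpl; intro R.
  - discriminate.
  - apply (ee_imp H).
  - rewrite (neg_ee H), IHt by exact R. reflexivity.
  - apply (ee_one H).
Qed.

Unset Implicit Arguments.

Theorem proposition3p7 (t1 t2 : term) :
  regular t1 = true -> regular t2 = true ->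
  (holds_in_all_sqW t1 t2 <-> holds_in_all_W t1 t2).
Proof.
  intros R1 R2; split.
  - intros Hq M HM v.
    rewrite <- !qeval_W. apply (Hq _ (W_sqW HM)).
  - intros Hw A HA v.
    rewrite <- (reg (proj1 HA) v t1 R1), <- (reg (proj1 HA) v t2 R2).
    rewrite <- !hom with (H := HA).
    f_equal. apply Hw. apply RW_W.
Qed.
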